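(* Let $G$ be a connected graph of order $n$ with maximum degree $\Delta\ge 3$. (i) If $2\Delta\le n-1$, then $$SO(G)\ge \Delta\left(\sqrt{\Delta^2+4}+\sqrt5\right)+2(n-2\Delta-1)\sqrt2,$$ with equality if and only if $G$ is a star-like tree of order $n$ with maximum degree $\Delta$ in which every neighbor of the maximum-degree vertex has degree two. (ii) If $2\Delta> n-1$, then $$SO(G)\ge (n-1-\Delta)\left(\sqrt{\Delta^2+4}+\sqrt5\right)+(2\Delta-n+1)\sqrt{\Delta^2+1},$$ with equality if and only if $G$ is a star-like tree of order $n$ with maximum degree $\Delta$ in which the maximum-degree vertex has exactly $2\Delta-n+1$ neighbors of degree one.
   Context: For a graph $G$, $d_G(w)$ denotes the degree of vertex $w$, and the Sombor index is $SO(G)=\sum_{ab\in E(G)}\sqrt{d_G(a)^2+d_G(b)^2}$. A star-like tree is a tree having exactly one vertex of degree greater than two. *)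

(* Defs.v *)
(* A simple graph is a symmetric irreflexive relation
   e : rel T on a finite vertex type T; its order is #|T|. *)
From mathcomp Require Import all_boot all_order all_algebra.
From mathcomp Require Import reals.
Set Implicit Arguments. Unset Strict Implicit. Unset Printing Implicit Defensive.
Import Order.TTheory GRing.Theory Num.Theory.

Section Graphs.
Variable T : finType.
Variable e : rel T.

Definition simple_graph : Prop := symmetric e /\ irreflexive e.

Definition deg (x : T) : nat := #|[pred y | e x y]|.

Definition maxdeg : nat := \max_(x : T) deg x.

Definition connected_graph : Prop := forall x y : T, connect e x y.

Definition has_cycle : Prop := exists c : seq T, (2 < size c)%N /\ ucycle e c.

Definition is_tree : Prop := connected_graph /\ ~ has_cycle.

Definition star_like_tree : Prop :=
  is_tree /\ #|[pred x | (2 < deg x)%N]| = 1%N.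

(* Sombor index: sum over edges ab of sqrt(d(a)^2 + d(b)^2).
   Each (unordered) edge ab appears twice as an ordered pair (a,b),(b,a),
   hence the factor 1/2. *)
Definition sombor (R : realType) : R :=
  (1 / 2) * \sum_(a : T) \sum_(b : T | e a b)
     Num.sqrt ((deg a)%:R ^+ 2 + (deg b)%:R ^+ 2).

End Graphs.

(* Main.v *)
Require Import Defs.
From mathcomp Require Import all_boot all_order all_algebra.
From mathcomp Require Import reals ring lra zify.
Import Order.TTheory GRing.Theory Num.Theory.
Set Implicit Arguments. Unset Strict Implicit. Unset Printing Implicit Defensive.

Section G.
Variable T : finType.
Variable e : rel T.
Hypothesis esym : symmetric e.
Hypothesis eirr : irreflexive e.

Lemma degE x : deg e x = \sum_y (e x y : nat).
Proof.
rewrite /deg -sum1_card big_mkcond /=; apply: eq_bigr => y _.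
by rewrite inE; case: (e x y).
Qed.

Definition goodp (S : {set T}) (q : seq T) :=
  if q is l :: r then [&& path e l r, uniq q & all (fun z => z \in S) q] else false.

Lemma goodp_size S q : goodp S q -> (size q <= #|T|)%N.
Proof.
case: q => [|l r] //= /and3P [_ U _].
have U' : uniq (l :: r) by [].
by move/card_uniqP: U' => /= <-; apply: max_card.
Qed.

Lemma cycle_of_mindeg2 (S : {set T}) :
  S != set0 ->
  (forall x w, x \in S -> exists y, [/\ y \in S, e x y & y != w]) ->
  has_cycle e.
Proof.
move=> /set0Pn [x0 Hx0] Hdeg.
pose P k := [exists t : k.-tuple T, goodp S t].
have exP : exists k, P k.
  exists 1%N; apply/existsP; exists [tuple x0] => /=.
  by rewrite Hx0.
have ubP : forall k, P k -> (k <= #|T|)%N.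
  by move=> k /existsP [t Ht]; move: (goodp_size Ht); rewrite size_tuple.
case: (ex_maxnP exP ubP) => K /existsP [t Ht] Kmax.
move: Ht. rewrite /goodp. case Et: (tval t) => [|l r]. by []. move=> /and3P [Hp Hu Hall].
have Hl : l \in S by move: Hall => /andP [].
pose w := if r is w :: _ then w else l.
have [y [yS ely ynw]] := Hdeg l w Hl.
case: (boolP (y \in l :: r)) => yin; last first.
  have : P K.+1.
    apply/existsP.
    have Hs : size (y :: l :: r) == K.+1 by have := size_tuple t; rewrite Et /= => ->.
    exists (Tuple Hs) => /=.
    rewrite /= esym ely Hp /= yin yS Hl /=.
    by move: Hu Hall => /= -> /andP [].
  by move/Kmax; rewrite ltnn.
have ynl : y != l by apply: contraTneq ely => ->; rewrite eirr.
move: yin; rewrite inE (negbTE ynl) /=.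
clear Et; rewrite /w in ynw; clear w.
case: r Hp Hu Hall ynw => [|w r'] //= /andP [elw Hp] Hu Hall ynw.
rewrite inE (negbTE ynw) /= => yr.
exists (l :: w :: take (index y r').+1 r').
split.
  rewrite /= size_take; case: ifP => // _.
  by case: (r') yr.
rewrite /ucycle; apply/andP; split.
  rewrite /cycle /= elw /=.
  rewrite (take_nth y); last by rewrite index_mem.
  rewrite nth_index // rcons_path last_rcons esym ely andbT.
  by have := take_path (index y r').+1 Hp; rewrite (take_nth y) ?index_mem // nth_index.
have : uniq (take (index y r').+3 (l :: w :: r')) by apply: take_uniq.
by [].
Qed.

Definition ES (S : {set T}) := \sum_(x in S) \sum_(y in S) (e x y : nat).

Lemma sum_del (S : {set T}) x (F : T -> nat) : x \in S ->
  \sum_(y in S) F y = F x + \sum_(y in S :\ x) F y.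
Proof.
move=> xS; rewrite (bigD1 x) //=; congr (_ + _).
by apply: eq_bigl => y; rewrite in_setD1 andbC.
Qed.

Lemma ES_del (S : {set T}) x : x \in S -> ES S = ES (S :\ x) + 2 * \sum_(y in S) e x y.
Proof.
move=> xS; rewrite /ES (@sum_del S x _ xS).
have H1 : \sum_(z in S :\ x) \sum_(y in S) (e z y : nat) =
          \sum_(z in S :\ x) (e z x : nat) + \sum_(z in S :\ x) \sum_(y in S :\ x) (e z y : nat).
  by rewrite -big_split /=; apply: eq_bigr => z _; rewrite (@sum_del S x _ xS).
rewrite H1.
have H2 : \sum_(z in S :\ x) (e z x : nat) = \sum_(y in S) (e x y : nat).
  by rewrite (@sum_del S x _ xS) eirr add0n; apply: eq_bigr => z _; rewrite esym.
rewrite H2; lia.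
Qed.

Lemma sum_pos_ex (A : {set T}) x : (0 < \sum_(y in A) (e x y : nat))%N ->
  exists y, y \in A /\ e x y.
Proof.
move=> H; case: (boolP [exists y, (y \in A) && e x y]) => [/existsP [y /andP [? ?]]|/negP Hn].
  by exists y.
exfalso; move: H; rewrite big1 // => y yA; case E: (e x y) => //.
by exfalso; apply: Hn; apply/existsP; exists y; rewrite yA E.
Qed.

Lemma strip : ~ has_cycle e -> forall S : {set T}, S != set0 -> ((ES S).+2 <= 2 * #|S|)%N.
Proof.
move=> nc S; move: {2}#|S| (erefl #|S|) => n; elim: n S => [|n IH] S HS Sne.
  by move: Sne; rewrite -card_gt0 HS.
have [x [xS dx]] : exists x, x \in S /\ (\sum_(y in S) (e x y : nat) <= 1)%N.
  case: (boolP [exists x in S, (\sum_(y in S) (e x y : nat) <= 1)%N]).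
    by move=> /existsP [x /andP [? ?]]; exists x.
  move=> Hn; exfalso; apply: nc; apply: (cycle_of_mindeg2 Sne) => x w xS.
  have H2 : (1 < \sum_(y in S) (e x y : nat))%N.
    rewrite ltnNge; apply: contra Hn => H; apply/existsP; exists x; by rewrite xS.
  case: (boolP (w \in S)) => wS.
    have : (0 < \sum_(y in S :\ w) (e x y : nat))%N.
      move: H2; rewrite (@sum_del S w _ wS); case: (e x w) => /=; lia.
    move/sum_pos_ex => [y [/setD1P [ynw yS] exy]]; by exists y.
  have : (0 < \sum_(y in S) (e x y : nat))%N by lia.
  move/sum_pos_ex => [y [yS exy]]; exists y; split => //.
  by apply: contraNneq wS => <-.
have HS' : #|S :\ x| = n by move: HS; rewrite (cardsD1 x S) xS add1n => -[].
rewrite (ES_del xS) HS.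
case: (boolP (S :\ x == set0)) => [/eqP E|Ne].
  have : \sum_(y in S) (e x y : nat) = 0%N.
    by rewrite (@sum_del S x _ xS) E big_set0 eirr.
  move=> ->; rewrite /ES E big_set0; move: HS'; rewrite E cards0 => <-.
  by [].
have := IH _ HS' Ne; lia.
Qed.

Lemma acyclic_deg_sum : ~ has_cycle e -> (0 < #|T|)%N ->
  ((\sum_x deg e x).+2 <= 2 * #|T|)%N.
Proof.
move=> nc Tn.
have Ne : [set: T] != set0 by rewrite -card_gt0 cardsT.
have := strip nc Ne; rewrite cardsT /ES.
have -> : \sum_x deg e x = \sum_(x in [set: T]) \sum_(y in [set: T]) (e x y : nat).
  by apply: eq_big => [x|x _]; rewrite ?inE // degE; apply: eq_bigl => y; rewrite inE.
by [].
Qed.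


Section Dist.
Variable v : T.
Hypothesis conn : forall x, connect e v x.

Definition reach k x := [exists t : k.-tuple T, path e v t && (last v t == x)].

Lemma reach_of_seq (p : seq T) x : path e v p -> last v p = x -> reach (size p) x.
Proof.
move=> Hp Hl; apply/existsP; exists (in_tuple p) => /=; by rewrite Hp Hl eqxx.
Qed.

Lemma ex_reach x : exists k, reach k x.
Proof. by case/connectP: (conn x) => p Hp Hl; exists (size p); apply: reach_of_seq. Qed.

Definition dist x := ex_minn (ex_reach x).

Lemma dist_reach x : reach (dist x) x.
Proof. by rewrite /dist; case: ex_minnP. Qed.

Lemma dist_min x k : reach k x -> (dist x <= k)%N.
Proof. by rewrite /dist; case: ex_minnP => m _ H /H. Qed.

Lemma dist_v : dist v = 0%N.
Proof.
apply/eqP; rewrite -leqn0; apply: dist_min.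
by have := @reach_of_seq [::] v isT erefl.
Qed.

Lemma dist_edge x y : e y x -> (dist x <= (dist y).+1)%N.
Proof.
move=> eyx; have /existsP [t /andP [Hp /eqP Hl]] := dist_reach y.
have := @reach_of_seq (rcons t x) x; rewrite rcons_path last_rcons Hp Hl eyx size_rcons size_tuple.
by move=> H; apply: dist_min; apply: H.
Qed.

Lemma dist_pred x : x != v -> exists y, e x y /\ (dist y).+1 = dist x.
Proof.
move=> xv; have /existsP [t /andP [Hp /eqP Hl]] := dist_reach x.
have St := size_tuple t.
move: Hp Hl St; case/lastP: (tval t) => [|p z]; first by move=> _ /= E; rewrite E eqxx in xv.
rewrite rcons_path last_rcons size_rcons => /andP [Hp ez] Ez Sz.
exists (last v p); split; first by rewrite esym -Ez.
have H1 := dist_min (reach_of_seq Hp erefl).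
have H2 := dist_edge (ez : e (last v p) z); rewrite Ez in H2.
lia.
Qed.

Definition par x := odflt x [pick y | e x y && ((dist y).+1 == dist x)].

Lemma par_spec x : x != v -> e x (par x) /\ (dist (par x)).+1 = dist x.
Proof.
move=> xv; rewrite /par; case: pickP => [y /andP [? /eqP ?]|H] //=.
have [y [exy dy]] := dist_pred xv.
by move: (H y); rewrite exy dy eqxx.
Qed.

Definition nontree x y := ~~ ((x != v) && (par x == y)) && ~~ ((y != v) && (par y == x)).

Definition ch x := \sum_y ((y != v) && (par y == x) : nat).

Lemma deg_lb x z (b : bool) : (b -> e x z && nontree x z) ->
  ((x != v) + ch x + b <= deg e x)%N.
Proof.
move=> Hb; rewrite degE /ch.
have E1 : (x != v : nat) = \sum_y ((x != v) && (y == par x) : nat).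
  rewrite (bigD1 (par x)) //= eqxx andbT big1 ?addn0 // => y ynp.
  by rewrite (negbTE ynp) andbF.
have E2 : (b : nat) = \sum_y (b && (y == z) : nat).
  rewrite (bigD1 z) //= eqxx andbT big1 ?addn0 // => y ynp.
  by rewrite (negbTE ynp) andbF.
rewrite E1 E2 -!big_split /=; apply: leq_sum => y _.
case: (boolP ((y != v) && (par y == x))) => [/andP [yv /eqP pyx]|H1].
  have [eyp dy] := par_spec yv; rewrite pyx in eyp dy.
  have -> : ((x != v) && (y == par x)) = false.
    apply/negbTE; apply/negP => /andP [xv /eqP ypx].
    have [_ dx] := par_spec xv; rewrite -ypx in dx; lia.
  have -> : (b && (y == z)) = false.
    apply/negbTE; apply/negP => /andP [bb /eqP yz].
    move: (Hb bb) => /andP [_ /andP [_ /negP Hn]]; apply: Hn; by rewrite -yz yv pyx eqxx.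
  by rewrite esym eyp.
case: (boolP ((x != v) && (y == par x))) => [/andP [xv /eqP ypx]|H2].
  have -> : (b && (y == z)) = false.
    apply/negbTE; apply/negP => /andP [bb /eqP yz].
    move: (Hb bb) => /andP [_ /andP [/negP Hn _]]; apply: Hn; by rewrite -yz xv ypx eqxx.
  have [exp _] := par_spec xv; by rewrite ypx exp.
case: (boolP (b && (y == z))) => [/andP [bb /eqP yz]|H3] //.
by move: (Hb bb) => /andP [exz _]; rewrite yz exz.
Qed.

Lemma sum_ch : \sum_x ch x = #|T|.-1.
Proof.
rewrite /ch exchange_big /= -(cardC1 v) -sum1_card [RHS]big_mkcond /=.
apply: eq_bigr => y _; rewrite (bigD1 (par y)) //= eqxx andbT big1 ?addn0 ?inE //.
by move=> x xn; move: xn; rewrite eq_sym => /negbTE ->; rewrite andbF.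

Qed.

Lemma sum_nv : \sum_x (x != v : nat) = #|T|.-1.
Proof. by rewrite -(cardC1 v) -sum1_card [RHS]big_mkcond /=; apply: eq_bigr => x _; rewrite inE; case: (x != v). Qed.

Lemma deg_sum_lb : (2 * #|T|.-1 <= \sum_x deg e x)%N.
Proof.
have : (\sum_x ((x != v : nat) + ch x + false) <= \sum_x deg e x)%N.
  by apply: leq_sum => x _; apply: (deg_lb (z := x)).
move=> H; rewrite !big_split /= sum_ch sum_nv big1_eq in H. lia.
Qed.

Lemma deg_ge1 x : x != v -> (1 <= deg e x)%N.
Proof. move=> xv; have H : (false -> e x x && nontree x x) by []. have := deg_lb H; rewrite xv; lia. Qed.

Lemma nontree_sum x0 y0 : e x0 y0 -> nontree x0 y0 -> (2 * #|T| <= \sum_x deg e x)%N.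
Proof.
move=> exy nt.
have xy : x0 != y0 by apply: contraTneq exy => ->; rewrite eirr.
have : (\sum_x ((x != v : nat) + ch x + ((x == x0) || (x == y0))) <= \sum_x deg e x)%N.
  apply: leq_sum => x _.
  case: (boolP (x == x0)) => [/eqP ->|xn0].
    by apply: (deg_lb (z := y0)) => _; rewrite exy nt.
  case: (boolP (x == y0)) => [/eqP ->|xn1].
    apply: (deg_lb (z := x0)) => _; rewrite esym exy /=.
    by move: nt; rewrite /nontree andbC.
  by apply: (deg_lb (z := x)).
rewrite !big_split /= sum_ch sum_nv.
have -> : \sum_x ((x == x0) || (x == y0) : nat) = 2%N.
  rewrite (bigD1 x0) //= eqxx (bigD1 y0) /=; last by rewrite eq_sym.
  rewrite eqxx orbT big1 // => x /andP [xn1 xn0].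
  by rewrite (negbTE xn0) (negbTE xn1).
have : (0 < #|T|)%N by apply/card_gt0P; exists v.
case: #|T| => // n _ /=; lia.
Qed.

Lemma max_in (s : seq T) (f : T -> nat) : s != [::] -> exists2 x, x \in s & forall y, y \in s -> (f y <= f x)%N.
Proof.
elim: s => [|a s IH] // _.
case: (eqVneq s [::]) => [->|sn].
  by exists a; rewrite ?inE // => y; rewrite inE => /eqP ->.
have [x xs Hx] := IH sn.
case: (leqP (f a) (f x)) => H.
  exists x; first by rewrite inE xs orbT.
  by move=> y; rewrite inE => /orP [/eqP ->|/Hx].
exists a; first by rewrite inE eqxx.
move=> y; rewrite inE => /orP [/eqP ->//|/Hx]; lia.
Qed.

Lemma cycle_sum : has_cycle e -> (2 * #|T| <= \sum_x deg e x)%N.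
Proof.
move=> [c [Hs Hc]].
have cn : c != [::] by case: (c) Hs.
have [x xc Hx] := max_in dist cn.
case: (rot_to xc) => i s Er.
have := Hc; rewrite -(rot_ucycle i) Er => /andP [Hcy Hu].
have Hsz : (2 <= size s)%N by move: Hs; rewrite -(size_rot i) Er.
move: Hcy Hu Hsz; case: s Er => [|a s] // Er; case/lastP: s Er => [|s b] // Er.
rewrite /cycle /= rcons_path last_rcons => /andP [exa /andP [_ ebx]].
move=> /andP [_ /andP [ans _]] _.
have anb : a != b by apply: contraNneq ans => ->; rewrite mem_rcons mem_head.
have ain : a \in c by rewrite -(mem_rot i) Er !inE eqxx orbT.
have bin : b \in c by rewrite -(mem_rot i) Er !inE mem_rcons mem_head !orbT.
have da := Hx a ain; have db := Hx b bin.
case: (boolP (nontree x a)) => [nt|].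
  exact: nontree_sum exa nt.
case: (boolP (nontree x b)) => [nt|].
  by move=> _; apply: (nontree_sum (x0:=x) (y0:=b)) => //; rewrite esym.
have Hy : forall y, (dist y <= dist x)%N -> (y != v) && (par y == x) -> False.
  move=> y dy /andP [yv /eqP pyx]; have [_ d] := par_spec yv; rewrite pyx in d; lia.
move=> nb na.
have pb : par x = b.
  move: nb; rewrite /nontree negb_and !negbK => /orP [/andP [_ /eqP] //|H].
  by exfalso; exact: Hy b db H.
have pa : par x = a.
  move: na; rewrite /nontree negb_and !negbK => /orP [/andP [_ /eqP] //|H].
  by exfalso; exact: Hy a da H.
by rewrite -pa -pb eqxx in anb.
Qed.


Lemma leaf_leaf a b : a != v -> b != v -> e a b -> deg e a = 1%N -> deg e b = 1%N -> False.
Proof.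
move=> av bv eab da db.
have Hu : forall x y z, e x y -> e x z -> deg e x = 1%N -> y = z.
  move=> x y z exy exz dx; apply/eqP; apply: contraT => yz.
  have : (\sum_w ((w == y) || (w == z) : nat) <= deg e x)%N.
    rewrite degE; apply: leq_sum => w _.
    case: (eqVneq w y) => [->|wy]; first by rewrite exy.
    by case: (eqVneq w z) => [->|wz] //=; rewrite exz.
  rewrite (bigD1 y) //= eqxx (bigD1 z) /=; last by rewrite eq_sym.
  rewrite eqxx orbT big1 ?dx // => w /andP [wz wy].
  by rewrite (negbTE wy) (negbTE wz).
have [ea1 d1] := par_spec av; have [eb1 d2] := par_spec bv.
have pa : par a = b by apply: Hu ea1 eab da.
have pb : par b = a by apply: Hu eb1 _ db; rewrite esym.
rewrite pa in d1; rewrite pb in d2; lia.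
Qed.

End Dist.
End G.

Section Cnt.
Variable T : finType.
Variable e : rel T.
Hypothesis esym : symmetric e.
Hypothesis eirr : irreflexive e.
Variable v : T.

Lemma sum_excl_deg : \sum_(a | a != v) deg e a + deg e v = \sum_a deg e a.
Proof. by rewrite [RHS](bigD1 v) //= addnC. Qed.

Lemma sum_excl_adj : \sum_(a | a != v) (e v a : nat) = deg e v.
Proof. by rewrite (degE e v) [RHS](bigD1 v) //= eirr. Qed.

Lemma sum_excl_q : \sum_(a | a != v) (e v a && (deg e a == 1%N) : nat) =
  #|[pred u | e v u && (deg e u == 1%N)]|.
Proof.
rewrite -sum1_card [RHS]big_mkcond [RHS](bigD1 v) //= inE eirr add0n.
by apply: eq_bigr => a _; rewrite inE; case: (_ && _).
Qed.

Lemma sum_excl_one : \sum_(a | a != v) 1 = #|T|.-1.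
Proof. by rewrite sum1_card cardC1. Qed.

Lemma card1_uniq (P : pred T) x y : #|P| = 1%N -> P x -> P y -> x = y.
Proof.
move=> H1 Px Py; apply/eqP; apply: contraT => nxy.
have : (#|pred2 x y| <= #|P|)%N.
  by apply: subset_leq_card; apply/subsetP => z; rewrite !inE => /orP [/eqP->|/eqP->].
by rewrite card2 nxy H1.
Qed.
End Cnt.

Lemma sum_eq_pw (I : finType) (P : pred I) (f g : I -> nat) :
  (forall i, P i -> g i <= f i)%N -> \sum_(i | P i) f i = \sum_(i | P i) g i ->
  forall i, P i -> f i = g i.
Proof.
move=> H E.
have : \sum_(i | P i) (f i - g i) = 0%N by rewrite sumnB // E subnn.
move/eqP; rewrite sum_nat_eq0 => /forallP Hf i Pi.
have := Hf i; rewrite Pi /= subn_eq0 => Hle; apply/eqP; rewrite eqn_leq Hle /=. by apply: H.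
Qed.

Local Open Scope ring_scope.

Section Reals.
Variable R : realType.

Definition s2 : R := Num.sqrt 2.
Definition s5 : R := Num.sqrt 5.
Definition F (a b : nat) : R := Num.sqrt (a%:R ^+ 2 + b%:R ^+ 2).
Definition h (d : nat) : R := if d == 1%N then s5 - s2 else d%:R * s2 / 2.

Lemma sqrt_ge (p q : R) : 0 <= p -> p ^+ 2 <= q -> p <= Num.sqrt q.
Proof.
move=> p0 pq; have := ler_wsqrtr pq; rewrite sqrtr_sqr ger0_norm //.
Qed.

Lemma sqrt_le (p q : R) : 0 <= p -> 0 <= q -> q <= p ^+ 2 -> Num.sqrt q <= p.
Proof.
move=> p0 q0 pq; have := ler_wsqrtr pq; rewrite sqrtr_sqr ger0_norm //.
Qed.

Lemma s2_ge0 : 0 <= s2. Proof. exact: sqrtr_ge0. Qed.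
Lemma s5_ge0 : 0 <= s5. Proof. exact: sqrtr_ge0. Qed.
Lemma s2_sq : s2 ^+ 2 = 2. Proof. by rewrite sqr_sqrtr. Qed.
Lemma s5_sq : s5 ^+ 2 = 5. Proof. by rewrite sqr_sqrtr. Qed.

Lemma s2_bnd : 707 <= 500 * s2 /\ 500 * s2 <= 708.
Proof. have := s2_ge0; have := s2_sq; split; nra. Qed.
Lemma s5_bnd : 2236 <= 1000 * s5 /\ 1000 * s5 <= 2237.
Proof. have := s5_ge0; have := s5_sq; split; nra. Qed.

Lemma F_ge0 a b : 0 <= F a b. Proof. exact: sqrtr_ge0. Qed.
Lemma F_sq a b : F a b ^+ 2 = a%:R ^+ 2 + b%:R ^+ 2.
Proof. by rewrite sqr_sqrtr // addr_ge0 // sqr_ge0. Qed.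
Lemma F_sym a b : F a b = F b a. Proof. by rewrite /F addrC. Qed.
Lemma F_ge a b : a%:R <= F a b.
Proof. apply: sqrt_ge; first exact: ler0n. by rewrite lerDl sqr_ge0. Qed.
Lemma F_mono a a' b : (a <= a')%N -> F a b <= F a' b.
Proof.
move=> H; apply: ler_wsqrtr; rewrite lerD2r.
have h1 : a%:R <= a'%:R :> R by rewrite ler_nat.
have h0 : 0 <= a%:R :> R := ler0n _ _. nra.
Qed.

Lemma F21 D : (3 <= D)%N -> 0 < F 2 D - F 1 D /\ F 2 D - F 1 D <= 1/2.
Proof.
move=> HD; have x3 : (3 : R) <= D%:R by rewrite (ler_nat R 3).
have := F_sq 2 D; have := F_sq 1 D; have := F_ge0 2 D; have := F_ge0 1 D.
have := F_ge D 1; rewrite F_sym => H1 .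
rewrite /= => *; split; nra.
Qed.


Lemma sq_eq (p q : R) : 0 <= p -> 0 <= q -> p ^+ 2 = q ^+ 2 -> p = q.
Proof.
move=> p0 q0 H; have := congr1 Num.sqrt H; rewrite !sqrtr_sqr !ger0_norm //.
Qed.

Lemma h1E : h 1 = s5 - s2. Proof. by []. Qed.
Lemma hE d : (2 <= d)%N -> h d = d%:R * s2 / 2.
Proof. by rewrite /h; case: d => [|[|d]]. Qed.

Lemma F12 : F 1 2 = s5. Proof. by rewrite /F /s5; congr Num.sqrt; rewrite -!natrX -natrD. Qed.
Lemma F22 : F 2 2 = 2 * s2.
Proof.
apply: sq_eq; [exact: F_ge0| by rewrite mulr_ge0 ?s2_ge0 |].
by rewrite F_sq exprMn s2_sq -!natrX -!natrD -natrM.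
Qed.

Lemma edge_ineq da db : (1 <= da)%N -> (1 <= db)%N -> ~~ ((da == 1%N) && (db == 1%N)) ->
  h da + h db <= F da db.
Proof.
have s2b := s2_bnd; have s5b := s5_bnd; have s2s := s2_sq; have s20 := s2_ge0.
wlog: da db / (da <= db)%N.
  move=> W H1 H2 H3; case: (leqP da db) => Hd; first exact: W.
  by rewrite addrC F_sym; apply: W => //; [exact: ltnW| rewrite andbC].
move=> Hle H1 H2 H3.
case: (eqVneq da 1%N) => [Ea|Na].
  subst da; rewrite h1E.
  case: (eqVneq db 2%N) => [->|Nb]; first by rewrite hE // F12; lra.
  have Hb : (3 <= db)%N by move: H3 Nb; rewrite eqxx /=; case: db H2 {Hle} => [|[|[|]]].
  rewrite hE; last exact: ltnW.
  have x3 : (3 : R) <= db%:R by rewrite (ler_nat R 3).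
  have := F_ge db 1; rewrite F_sym => Hf.
  nra.
have Ha : (2 <= da)%N by case: da H1 Na {Hle H3} => [|[|]].
rewrite !hE //; last exact: leq_trans Hle.
have x0 : 0 <= da%:R :> R := ler0n _ _. have y0 : 0 <= db%:R :> R := ler0n _ _.
apply: sqrt_ge; first nra.
have -> : (da%:R * s2 / 2 + db%:R * s2 / 2) ^+ 2 = s2 ^+ 2 * (da%:R + db%:R) ^+ 2 / 4 :> R.
  by field.
rewrite s2s; have := sqr_ge0 (da%:R - db%:R : R); lra.
Qed.

Lemma edge_eq da db : (da == 1%N) || (da == 2%N) -> (db == 1%N) || (db == 2%N) ->
  ~~ ((da == 1%N) && (db == 1%N)) -> h da + h db = F da db.
Proof.
move=> /orP [/eqP->|/eqP->] /orP [/eqP->|/eqP->] //= _.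
- by rewrite h1E hE // F12; lra.
- by rewrite h1E hE // F_sym F12; lra.
- by rewrite hE // F22; lra.
Qed.


Definition psi (D : nat) (adj : bool) (d : nat) : R :=
  d%:R * h d + (adj : nat)%:R * (F d D - h d).
Definition lin (al be ga : R) (adj : bool) (d : nat) : R :=
  al + be * d%:R + (adj : nat)%:R * ga.

Lemma strict_ok (a b : R) : a < b -> a <= b /\ (b == a) = false.
Proof. by move=> H; split; [exact: ltW | exact: gt_eqF]. Qed.
Lemma eq_ok (a b : R) : a = b -> a <= b /\ (b == a) = true.
Proof. by move=> ->; rewrite lexx eqxx. Qed.

Section Case1.
Variable D : nat.
Hypothesis HD : (3 <= D)%N.
Definition A1 : R := 2 * s5 - 4 * s2.
Definition B1 : R := 3 * s2 - s5.
Definition G1 : R := F 2 D - s2.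

Lemma v1_nonadj d : lin A1 B1 G1 false d <= psi D false d /\
  (psi D false d == lin A1 B1 G1 false d) = (d == 1%N) || (d == 2%N).
Proof.
have s2b := s2_bnd; have s5b := s5_bnd; have s2s := s2_sq; have s20 := s2_ge0.
rewrite /psi /lin /A1 /B1 /= !mul0r !addr0.
case: d => [|[|[|d]]] /=.
- by apply: strict_ok; rewrite mul0r; lra.
- by apply: eq_ok; rewrite h1E; lra.
- by apply: eq_ok; rewrite hE //; lra.
rewrite hE //; apply: strict_ok.
set x := (d.+3)%:R : R.
have x3 : (3 : R) <= x by rewrite /x (ler_nat R 3).
have H : x * (x * s2) >= 3 * (x * s2) by nra.
nra.
Qed.

Lemma v1_adj d : (1 <= d)%N -> lin A1 B1 G1 true d <= psi D true d /\
  (psi D true d == lin A1 B1 G1 true d) = (d == 2%N).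
Proof.
move=> d1.
have s2b := s2_bnd; have s5b := s5_bnd; have s2s := s2_sq; have s20 := s2_ge0.
have [f1 f2] := F21 HD.
rewrite /psi /lin /A1 /B1 /G1 /= !mul1r.
case: d d1 => [|[|[|d]]] //= _.
- by apply: strict_ok; rewrite h1E; lra.
- by apply: eq_ok; rewrite hE //; lra.
rewrite hE //; apply: strict_ok.
set x := (d.+3)%:R : R.
have x3 : (3 : R) <= x by rewrite /x (ler_nat R 3).
have Fm : F 2 D <= F d.+3 D by apply: F_mono.
have H : x * (x * s2) >= 3 * (x * s2) by nra.
nra.
Qed.
End Case1.

Section Case2.
Variable D : nat.
Hypothesis HD : (3 <= D)%N.
Definition B2 : R := F 2 D + s2 - F 1 D.
Definition A2 : R := s5 - s2 - B2.
Definition G2 : R := F 1 D - s5 + s2.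

Lemma v2_nonadj d : lin A2 B2 G2 false d <= psi D false d /\
  (psi D false d == lin A2 B2 G2 false d) = (d == 1%N).
Proof.
have s2b := s2_bnd; have s5b := s5_bnd; have s2s := s2_sq; have s20 := s2_ge0.
have [f1 f2] := F21 HD.
rewrite /psi /lin /A2 /B2 /= !mul0r !addr0.
case: d => [|[|[|d]]] /=.
- by apply: strict_ok; rewrite mul0r; lra.
- by apply: eq_ok; rewrite h1E; lra.
- by apply: strict_ok; rewrite hE //; lra.
rewrite hE //; apply: strict_ok.
set x := (d.+3)%:R : R.
have x3 : (3 : R) <= x by rewrite /x (ler_nat R 3).
have H : x * (x * s2) >= 3 * (x * s2) by nra.
nra.
Qed.

Lemma v2_adj d : (1 <= d)%N -> lin A2 B2 G2 true d <= psi D true d /\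
  (psi D true d == lin A2 B2 G2 true d) = (d <= 2)%N.
Proof.
move=> d1.
have s2b := s2_bnd; have s5b := s5_bnd; have s2s := s2_sq; have s20 := s2_ge0.
have [f1 f2] := F21 HD.
rewrite /psi /lin /A2 /B2 /G2 /= !mul1r.
case: d d1 => [|[|[|d]]] //= _.
- by apply: eq_ok; rewrite h1E; lra.
- by apply: eq_ok; rewrite hE //; lra.
rewrite hE //; apply: strict_ok.
set x := (d.+3)%:R : R.
have x3 : (3 : R) <= x by rewrite /x (ler_nat R 3).
have Fm : F 1 D <= F d.+3 D by apply: F_mono.
have H : x * (x * s2) >= 3 * (x * s2) by nra.
nra.
Qed.
End Case2.

End Reals.

Section Main.
Variable R : realType.
Variable T : finType.
Variable e : rel T.
Hypothesis esym : symmetric e.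
Hypothesis eirr : irreflexive e.
Variable v : T.

Definition g (a b : T) : R :=
  if a == v then 0 else if b == v then F R (deg e a) (deg e v) else h R (deg e a).

Definition Sedge : R := \sum_a \sum_(b | e a b) (F R (deg e a) (deg e b) - g a b - g b a).

Lemma sombor_split : sombor e R = \sum_a \sum_(b | e a b) g a b + (1/2) * Sedge.
Proof.
have Hs : \sum_a \sum_(b | e a b) g b a = \sum_a \sum_(b | e a b) g a b.
  rewrite (exchange_big_dep predT) //=; apply: eq_bigr => a _; apply: eq_bigl => b; by rewrite esym.
rewrite /Sedge /sombor.
have -> : \sum_a \sum_(b | e a b) (F R (deg e a) (deg e b) - g a b - g b a) =
  \sum_a \sum_(b | e a b) F R (deg e a) (deg e b) - \sum_a \sum_(b | e a b) g a b
   - \sum_a \sum_(b | e a b) g b a.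
  rewrite -!sumrB; apply: eq_bigr => a _; by rewrite -!sumrB.
rewrite Hs /F; lra.
Qed.

Lemma sum_g a : \sum_(b | e a b) g a b =
  if a == v then 0 else psi R (deg e v) (e a v) (deg e a).
Proof.
rewrite /g; case: (a == v); first by rewrite big1.
rewrite /psi.
have -> : \sum_(b | e a b) (if b == v then F R (deg e a) (deg e v) else h R (deg e a)) =
   \sum_(b | e a b) (h R (deg e a) + (b == v : nat)%:R * (F R (deg e a) (deg e v) - h R (deg e a))).
  by apply: eq_bigr => b _; case: (b == v) => /=; rewrite ?mul1r ?mul0r; ring.
rewrite big_split /= -mulr_suml sumr_const.
have -> : \sum_(b | e a b) (b == v : nat)%:R = (e a v : nat)%:R :> R.
  rewrite -natr_sum; congr (_ %:R).
  case Eav: (e a v).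
    rewrite (bigD1 v) //= eqxx big1 // => b /andP [_ /negbTE ->] //.
  rewrite big1 // => b eab; case: eqP => // Ebv; by rewrite -Ebv eab in Eav.
by rewrite /deg !mulr_natl.
Qed.

Lemma sum_lin (al be ga : R) : (0 < #|T|)%N ->
  \sum_(a | a != v) lin al be ga (e a v) (deg e a) =
  al * (#|T|%:R - 1) + be * ((\sum_a deg e a)%:R - (deg e v)%:R) + ga * (deg e v)%:R.
Proof.
move=> Tn; rewrite /lin !big_split /= -!mulr_sumr -mulr_suml sumr_const cardC1 -[al *+ _]mulr_natr.
have -> : (#|T|.-1 : nat)%:R = #|T|%:R - 1 :> R by rewrite -[in RHS](prednK Tn) -natr1 addrK.
have -> : \sum_(a | a != v) (deg e a)%:R = (\sum_a deg e a)%:R - (deg e v)%:R :> R.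
  by rewrite natr_sum [in RHS](bigD1 v) //= addrC addrK.
have -> : \sum_(a | a != v) (e a v : nat)%:R = (deg e v)%:R :> R.
  rewrite -natr_sum degE; congr (_ %:R).
  rewrite [RHS](bigD1 v) //= eirr add0n; apply: eq_bigr => a _; by rewrite esym.
by rewrite mulr_natr; ring.
Qed.


Hypothesis Hdeg1 : forall x, x != v -> (1 <= deg e x)%N.
Hypothesis Hll : forall a b, a != v -> b != v -> e a b -> deg e a = 1%N -> deg e b = 1%N -> False.
Hypothesis Hsd : (2 * #|T|.-1 <= \sum_a deg e a)%N.
Hypothesis Tn : (0 < #|T|)%N.

Lemma edge_term a b : e a b ->
  0 <= F R (deg e a) (deg e b) - g a b - g b a /\
  ((forall x, x != v -> (deg e x <= 2)%N) -> F R (deg e a) (deg e b) - g a b - g b a = 0).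
Proof.
move=> eab; rewrite /g.
case: (eqVneq a v) => [Ea|av].
  have bv : b != v by apply: contraTneq eab => ->; rewrite Ea eirr.
  rewrite Ea (negbTE bv) F_sym; split => *; rewrite subr0 subrr //.
case: (eqVneq b v) => [Eb|bv].
  rewrite Eb; split => *; rewrite subr0 subrr //.
have Hnot : ~~ ((deg e a == 1%N) && (deg e b == 1%N)).
  by apply/negP => /andP [/eqP da /eqP db]; apply: (Hll av bv eab da db).
split.
  have := edge_ineq R (Hdeg1 av) (Hdeg1 bv) Hnot; lra.
move=> H2; have := edge_eq R _ _ Hnot.
have Q : forall x, x != v -> (deg e x == 1%N) || (deg e x == 2%N).
  move=> x xv; have := H2 x xv; have := Hdeg1 xv; case: (deg e x) => [|[|[|]]] //.
move=> /(_ (Q a av) (Q b bv)); lra.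
Qed.

Lemma Sedge_ge0 : 0 <= Sedge.
Proof.
by apply: sumr_ge0 => a _; apply: sumr_ge0 => b eab; case: (edge_term eab).
Qed.

Lemma Sedge_eq0 : (forall x, x != v -> (deg e x <= 2)%N) -> Sedge = 0.
Proof.
move=> H; rewrite /Sedge big1 // => a _; rewrite big1 // => b eab.
by case: (edge_term eab) => _ ->.
Qed.

Lemma framework (al be ga : R) (Pv : bool -> nat -> bool) :
  0 < be ->
  (forall a, a != v -> lin al be ga (e a v) (deg e a) <= psi R (deg e v) (e a v) (deg e a) /\
     (psi R (deg e v) (e a v) (deg e a) == lin al be ga (e a v) (deg e a)) = Pv (e a v) (deg e a)) ->
  let tg := al * (#|T|%:R - 1) + be * (2 * (#|T|%:R - 1) - (deg e v)%:R) + ga * (deg e v)%:R in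
  tg <= sombor e R /\
  (sombor e R = tg -> (\sum_a deg e a = 2 * #|T|.-1)%N /\ forall a, a != v -> Pv (e a v) (deg e a)) /\
  ((\sum_a deg e a = 2 * #|T|.-1)%N -> (forall a, a != v -> Pv (e a v) (deg e a)) ->
   (forall a, a != v -> deg e a <= 2)%N -> sombor e R = tg).
Proof.
move=> be0 Hv tg.
pose Sv := \sum_(a | a != v) (psi R (deg e v) (e a v) (deg e a) - lin al be ga (e a v) (deg e a)).
have Hn1 : (#|T|.-1 : nat)%:R = #|T|%:R - 1 :> R by rewrite -[in RHS](prednK Tn) -natr1 addrK.
have Eq : sombor e R = tg + Sv + be * ((\sum_a deg e a)%:R - 2 * (#|T|%:R - 1)) + (1/2) * Sedge.
  rewrite sombor_split.
  have -> : \sum_a \sum_(b | e a b) g a b = \sum_(a | a != v) psi R (deg e v) (e a v) (deg e a).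
    rewrite (bigD1 v) //= sum_g eqxx add0r; apply: eq_bigr => a av.
    by rewrite sum_g (negbTE av).
  have -> : \sum_(a | a != v) psi R (deg e v) (e a v) (deg e a) =
     Sv + \sum_(a | a != v) lin al be ga (e a v) (deg e a).
    by rewrite /Sv -big_split /=; apply: eq_bigr => a _; rewrite subrK.
  rewrite sum_lin // /tg; ring.
have Sv0 : 0 <= Sv by apply: sumr_ge0 => a av; case: (Hv a av) => H _; rewrite subr_ge0.
have Sd0 : 0 <= (\sum_a deg e a)%:R - 2 * (#|T|%:R - 1) :> R.
  by rewrite -Hn1 subr_ge0 -natrM ler_nat.
have Se0 := Sedge_ge0.
split.
  rewrite Eq; have : 0 <= be * ((\sum_a deg e a)%:R - 2 * (#|T|%:R - 1)) by rewrite mulr_ge0 // ltW.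
  lra.
split.
  move=> Heq.
  have Hbe : be * ((\sum_a deg e a)%:R - 2 * (#|T|%:R - 1)) >= 0 by rewrite mulr_ge0 // ltW.
  have Sv00 : Sv = 0 by move: Heq; rewrite Eq; lra.
  have Sd00 : be * ((\sum_a deg e a)%:R - 2 * (#|T|%:R - 1)) = 0 by move: Heq; rewrite Eq; lra.
  split.
    move: Sd00 => /eqP; rewrite mulf_eq0 (gt_eqF be0) /= subr_eq0 -Hn1 -natrM eqr_nat.
    by move/eqP.
  have Hnn : forall i, i != v -> 0 <= psi R (deg e v) (e i v) (deg e i) - lin al be ga (e i v) (deg e i).
    by move=> i iv; case: (Hv i iv) => H _; rewrite subr_ge0.
  move=> a av; case: (Hv a av) => _ <-; apply/eqP.
  by have /eqP := psumr_eq0P Hnn Sv00 av; rewrite subr_eq0 => /eqP.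
move=> HS HP H2.
have Sv00 : Sv = 0.
  rewrite /Sv big1 // => a av; apply/eqP; rewrite subr_eq0.
  by case: (Hv a av) => _ ->; apply: HP.
rewrite Eq Sv00 (Sedge_eq0 H2) HS natrM Hn1; ring.
Qed.

End Main.

Unset Implicit Arguments. Set Strict Implicit. Set Printing Implicit Defensive.

Lemma F2E (R : realType) D : F R 2 D = Num.sqrt (D%:R ^+ 2 + 4).
Proof. rewrite /F addrC; congr (Num.sqrt (_ + _)); ring. Qed.
Lemma F1E (R : realType) D : F R 1 D = Num.sqrt (D%:R ^+ 2 + 1).
Proof. by rewrite /F addrC expr1n. Qed.

Lemma tg1 (R : realType) (N : R) D :
  A1 R * (N - 1) + B1 R * (2 * (N - 1) - D%:R) + G1 R D * D%:R =
  D%:R * (Num.sqrt (D%:R ^+ 2 + 4) + Num.sqrt 5) + 2 * (N - 2 * D%:R - 1) * Num.sqrt 2.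
Proof. rewrite /A1 /B1 /G1 F2E /s2 /s5; ring. Qed.

Lemma tg2 (R : realType) (N : R) D :
  A2 R D * (N - 1) + B2 R D * (2 * (N - 1) - D%:R) + G2 R D * D%:R =
  (N - 1 - D%:R) * (Num.sqrt (D%:R ^+ 2 + 4) + Num.sqrt 5)
   + (2 * D%:R - N + 1) * Num.sqrt (D%:R ^+ 2 + 1).
Proof. rewrite /A2 /B2 /G2 F2E F1E /s2 /s5; ring. Qed.

Theorem theorem2p2 (R : realType) (T : finType) (e : rel T)
  (Hsimple : simple_graph e) (Hconn : connected_graph e)
  (HD : (3 <= maxdeg e)%N) :
  let n := #|T| in
  let D := maxdeg e in
  ((2 * D <= n - 1)%N ->
     sombor e R >= D%:R * (Num.sqrt (D%:R ^+ 2 + 4) + Num.sqrt 5)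
                   + 2 * (n%:R - 2 * D%:R - 1) * Num.sqrt 2 /\
     (sombor e R = D%:R * (Num.sqrt (D%:R ^+ 2 + 4) + Num.sqrt 5)
                   + 2 * (n%:R - 2 * D%:R - 1) * Num.sqrt 2 <->
      star_like_tree e /\
      (forall v u : T, deg e v = D -> e v u -> deg e u = 2%N))) /\
  ((n - 1 < 2 * D)%N ->
     sombor e R >= (n%:R - 1 - D%:R) * (Num.sqrt (D%:R ^+ 2 + 4) + Num.sqrt 5)
                   + (2 * D%:R - n%:R + 1) * Num.sqrt (D%:R ^+ 2 + 1) /\
     (sombor e R = (n%:R - 1 - D%:R) * (Num.sqrt (D%:R ^+ 2 + 4) + Num.sqrt 5)
                   + (2 * D%:R - n%:R + 1) * Num.sqrt (D%:R ^+ 2 + 1) <->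
      star_like_tree e /\
      (forall v : T, deg e v = D ->
         #|[pred u | e v u && (deg e u == 1%N)]| = ((2 * D).+1 - n)%N))).
Proof.
move=> n D; rewrite {}/n {}/D.
have [esym eirr] := Hsimple.
have [x0 _] : exists x0 : T, true.
  case: (pickP (T:=T) xpredT) => [x0 _|Hn]; first by exists x0.
  by exfalso; move: HD; rewrite /maxdeg big1 // => x; have := Hn x.
have := bigop.bigmax_eq_arg x0 (P := xpredT) (F := deg e) isT.
set v := [arg max_(i > x0 | _) _] => Hv.
have Dv : deg e v = maxdeg e by rewrite /maxdeg Hv.
have Dle : forall x, (deg e x <= maxdeg e)%N := fun x => leq_bigmax x.
have HD' : (3 <= deg e v)%N by rewrite Dv.
have conn : forall x, connect e v x := Hconn v.
have Hdeg1 := deg_ge1 esym conn.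
have Hll := leaf_leaf esym conn.
have Hsd := deg_sum_lb esym conn.
have Tn : (0 < #|T|)%N by apply/card_gt0P; exists v.
have Hcyc := cycle_sum esym eirr conn.
have Hacyc := acyclic_deg_sum esym eirr.
have star_from : (forall a, a != v -> deg e a <= 2)%N -> #|[pred x | (2 < deg e x)%N]| = 1%N.
  move=> H; transitivity #|pred1 v|; last exact: card1.
  apply: eq_card => x; rewrite !inE.
  by case: (eqVneq x v) => [->|xv]; [rewrite HD' | rewrite ltnNge H].
have le2_from_star : star_like_tree e -> forall a, a != v -> (deg e a <= 2)%N.
  move=> [_ H1] a av; rewrite leqNgt; apply/negP => Ha; move/eqP: av; apply.
  by apply: (card1_uniq H1) => /=; [exact: Ha | exact: HD'].
have tree_from : (\sum_a deg e a = 2 * #|T|.-1)%N -> is_tree e.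
  move=> HS; split => // Hc; move: (Hcyc Hc); rewrite HS; move: Tn.
  by case: #|T| => // k _ /=; lia.
have Sd_from_tree : is_tree e -> (\sum_a deg e a = 2 * #|T|.-1)%N.
  move=> [_ Hnc]; move: (Hacyc Hnc Tn) Hsd; case: #|T| Tn => // k _ /=; lia.
have uniq_max : (forall a, a != v -> deg e a <= 2)%N -> forall w, deg e w = maxdeg e -> w = v.
  move=> H w Dw; apply/eqP; apply: contraT => wv; have := H w wv; rewrite Dw; lia.
split.
  move=> Hi.
  have B1pos : 0 < B1 R by rewrite /B1; have := s2_bnd R; have := s5_bnd R; lra.
  pose Pv1 := fun (adj : bool) (d : nat) => if adj then d == 2%N else (d == 1%N) || (d == 2%N).
  have Hvv : forall a, a != v -> lin (A1 R) (B1 R) (G1 R (deg e v)) (e a v) (deg e a)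
      <= psi R (deg e v) (e a v) (deg e a) /\
     (psi R (deg e v) (e a v) (deg e a) == lin (A1 R) (B1 R) (G1 R (deg e v)) (e a v) (deg e a))
      = Pv1 (e a v) (deg e a).
    move=> a av; rewrite /Pv1; case: (e a v).
      by apply: v1_adj => //; exact: Hdeg1.
    exact: v1_nonadj.
  have [FW1 [FW2 FW3]] := framework esym eirr Hdeg1 Hll Hsd Tn B1pos Hvv.
  rewrite Dv tg1 in FW1 FW2 FW3.
  split; first exact: FW1.
  split.
    move=> Heq; have [HS HP] := FW2 Heq.
    have H2 : forall a, a != v -> (deg e a <= 2)%N.
      move=> a av; move: (HP a av); rewrite /Pv1; case: (e a v).
        by move/eqP ->.
      by case/orP => /eqP ->.
    split; first by split; [exact: tree_from | exact: star_from].
    move=> w u Dw ewu; have wv := uniq_max H2 w Dw; subst w.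
    have uv : u != v by apply: contraTneq ewu => ->; rewrite eirr.
    by move: (HP u uv); rewrite /Pv1 esym ewu => /eqP.
  move=> [Hst Hnb]; apply: FW3.
  - exact: Sd_from_tree (proj1 Hst).
  - move=> a av; rewrite /Pv1; case E: (e a v).
      by apply/eqP; apply: (Hnb v a Dv); rewrite esym.
    have := le2_from_star Hst a av; have := Hdeg1 a av.
    by case: (deg e a) => [|[|[|]]].
  - exact: le2_from_star.
move=> Hii.
have B2pos : 0 < B2 R (deg e v).
  by rewrite /B2; have := F21 R HD'; have := s2_bnd R; lra.
pose Pv2 := fun (adj : bool) (d : nat) => if adj then (d <= 2)%N else d == 1%N.
have Hvv : forall a, a != v -> lin (A2 R (deg e v)) (B2 R (deg e v)) (G2 R (deg e v)) (e a v) (deg e a)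
    <= psi R (deg e v) (e a v) (deg e a) /\
   (psi R (deg e v) (e a v) (deg e a) == lin (A2 R (deg e v)) (B2 R (deg e v)) (G2 R (deg e v)) (e a v) (deg e a))
    = Pv2 (e a v) (deg e a).
  move=> a av; rewrite /Pv2; case: (e a v).
    by apply: v2_adj => //; exact: Hdeg1.
  exact: v2_nonadj.
have [FW1 [FW2 FW3]] := framework esym eirr Hdeg1 Hll Hsd Tn B2pos Hvv.
rewrite Dv tg2 in FW1 FW2 FW3.
have Hsum : (\sum_(a | a != v) (deg e a + (e v a && (deg e a == 1%N))))%N =
            (\sum_a deg e a - maxdeg e + #|[pred u | e v u && (deg e u == 1%N)]|)%N.
  rewrite big_split /= sum_excl_q // -(sum_excl_deg e v) Dv addnK //.
have Hsum1 : (\sum_(a | a != v) (1 + e v a))%N = (#|T|.-1 + maxdeg e)%N.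
  by rewrite big_split /= sum_excl_one sum_excl_adj // Dv.
have HSv := sum_excl_deg e v; rewrite Dv in HSv.
split; first exact: FW1.
split.
  move=> Heq; have [HS HP] := FW2 Heq.
  have H2 : forall a, a != v -> (deg e a <= 2)%N.
    move=> a av; move: (HP a av); rewrite /Pv2; case: (e a v) => //.
    by move/eqP ->.
  split; first by split; [exact: tree_from | exact: star_from].
  move=> w Dw; have wv := uniq_max H2 w Dw; subst w.
  have Hpw : forall a, a != v -> (deg e a + (e v a && (deg e a == 1%N)))%N = (1 + e v a)%N.
    move=> a av; move: (HP a av) (Hdeg1 a av); rewrite /Pv2 esym.
    case: (e v a) => /=.
      by case: (deg e a) => [|[|[|]]].
    by move/eqP ->.
  have := Hsum; rewrite (eq_bigr _ Hpw) Hsum1.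
  move: HS HSv Hii; case: #|T| Tn => // k _ /=; lia.
move=> [Hst Hq]; have Hq' := Hq v Dv.
have H2 := le2_from_star Hst.
have HS := Sd_from_tree (proj1 Hst).
have Hpw : forall a, a != v -> (1 + e v a <= deg e a + (e v a && (deg e a == 1%N)))%N.
  move=> a av; move: (H2 a av) (Hdeg1 a av).
  case: (e v a) => /=; case: (deg e a) => [|[|[|]]] //.
have Heqs : (\sum_(a | a != v) (deg e a + (e v a && (deg e a == 1%N))))%N =
            (\sum_(a | a != v) (1 + e v a))%N.
  rewrite Hsum Hsum1 Hq'; move: HS HSv Hii; case: #|T| Tn => // k _ /=; lia.
have Hpe := sum_eq_pw Hpw Heqs.
apply: FW3 => // a av; rewrite /Pv2 esym.
move: (Hpe a av) (H2 a av); case: (e v a) => //= H _.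
by apply/eqP; move: H; lia.
Qed.
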